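(* Let $a,b,c,k,m>0$. The system $$\frac{dx}{dt}=bx(1-x-cy),\qquad \frac{dy}{dt}=y\Big(\frac{1}{1+kx}-y-ax-mxy\Big)$$ has no limit cycle (indeed no closed trajectory) lying in the open positive quadrant $\{(x,y):x>0,y>0\}$.
   Context: All parameters are positive constants. *)

(* Defs.v *)
From Stdlib Require Import Reals.
Open Scope R_scope.

Definition fx (b c : R) (x y : R) : R := b * x * (1 - x - c * y).
Definition fy (a k m : R) (x y : R) : R :=
  y * (1 / (1 + k * x) - y - a * x - m * x * y).

Definition is_solution (a b c k m : R) (x y : R -> R) : Prop :=
  forall t, derivable_pt_lim x t (fx b c (x t) (y t)) /\
            derivable_pt_lim y t (fy a k m (x t) (y t)).

Definition is_closed_trajectory (a b c k m : R) (x y : R -> R) : Prop :=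
  is_solution a b c k m x y /\
  (exists T, 0 < T /\ forall t, x (t + T) = x t /\ y (t + T) = y t) /\
  (exists t1 t2, x t1 <> x t2 \/ y t1 <> y t2).

Definition in_open_quadrant (x y : R -> R) : Prop :=
  forall t, 0 < x t /\ 0 < y t.

(* Main.v *)
Require Import Defs.
From Stdlib Require Import Reals Lra.
From Coquelicot Require Import Coquelicot.
Open Scope R_scope.

Lemma D2C f t l : derivable_pt_lim f t l -> continuity_pt f t.
Proof. intro H. apply derivable_continuous_pt. exists l. exact H. Qed.

Lemma max_deriv0 f a b c l : derivable_pt_lim f c l -> a < c < b ->
  (forall s, a < s < b -> f s <= f c) -> l = 0.
Proof.
  intros H [h1 h2] Hm.
  pose (pr := exist _ l H : derivable_pt f c).
  pose proof (deriv_maximum f a b c pr h1 h2 (fun s u v => Hm s (conj u v))) as HH.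
  simpl in HH. auto.
Qed.

Lemma periodic_max f T : 0 < T -> (forall t, f (t + T) = f t) ->
  (forall t, continuity_pt f t) ->
  exists c, 0 <= c <= T /\ forall s, -T < s < 2*T -> f s <= f c.
Proof.
  intros hT hp hc.
  destruct (continuity_ab_maj f 0 T) as [M [HM HMi]]; [lra| intros; apply hc|].
  exists M; split; auto.
  intros s Hs.
  destruct (Rle_dec 0 s) as [h0|h0].
  - destruct (Rle_dec s T) as [h1|h1].
    + apply HM; lra.
    + replace s with ((s - T) + T) by ring. rewrite hp. apply HM; lra.
  - rewrite <- hp. apply HM; lra.
Qed.

Lemma const_on f f' A B u v : (forall t, derivable_pt_lim f t (f' t)) ->
  (forall t, A <= t <= B -> f' t = 0) -> A <= u <= B -> A <= v <= B -> f u = f v.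
Proof.
  intros Hd H0 Hu Hv.
  destruct (Rtotal_order u v) as [h|[h|h]].
  - destruct (MVT_cor2 f f' u v h (fun c _ => Hd c)) as [z [Hz1 Hz2]].
    rewrite H0 in Hz1 by lra. lra.
  - subst; reflexivity.
  - destruct (MVT_cor2 f f' v u h (fun c _ => Hd c)) as [z [Hz1 Hz2]].
    rewrite H0 in Hz1 by lra. lra.
Qed.

Lemma gronwall E E' K A B c : (forall t, derivable_pt_lim E t (E' t)) ->
  (forall t, 0 <= E t) -> (forall t, A <= t <= B -> Rabs (E' t) <= K * E t) ->
  A <= c <= B -> E c = 0 -> forall t, A <= t <= B -> E t = 0.
Proof.
  intros Hd Hp Hb Hc H0 t Ht.
  destruct (Rtotal_order c t) as [h|[h|h]].
  - set (F := fun s => E s * exp (- K * s)).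
    set (F' := fun s => E' s * exp (- K * s) - K * E s * exp (- K * s)).
    assert (HF : forall s, derivable_pt_lim F s (F' s)).
    { intro s. apply is_derive_Reals. unfold F, F'.
      pose proof proj2 (is_derive_Reals _ _ _) (Hd s) as Hs.
      auto_derive. eexists; exact Hs.
      replace (Derive (fun x => E x) s) with (E' s) by (symmetry; apply is_derive_unique; exact Hs). ring. }
    destruct (MVT_cor2 F F' c t h (fun z _ => HF z)) as [z [Hz1 Hz2]].
    unfold F, F' in Hz1. rewrite H0 in Hz1.
    pose proof (Hb z ltac:(lra)). pose proof (Rle_abs (E' z)). pose proof (exp_pos (-K*z)).
    pose proof (exp_pos (-K*t)). pose proof (Hp t).
    assert (E t * exp (- K * t) <= 0).
    { assert ((E' z - K * E z) * exp (- K * z) <= 0).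
      { apply Rmult_le_0_r; lra. }
      nra. }
    nra.
  - subst; auto.
  - set (F := fun s => E s * exp (K * s)).
    set (F' := fun s => E' s * exp (K * s) + K * E s * exp (K * s)).
    assert (HF : forall s, derivable_pt_lim F s (F' s)).
    { intro s. apply is_derive_Reals. unfold F, F'.
      pose proof proj2 (is_derive_Reals _ _ _) (Hd s) as Hs.
      auto_derive. eexists; exact Hs.
      replace (Derive (fun x => E x) s) with (E' s) by (symmetry; apply is_derive_unique; exact Hs). ring. }
    destruct (MVT_cor2 F F' t c h (fun z _ => HF z)) as [z [Hz1 Hz2]].
    unfold F, F' in Hz1. rewrite H0 in Hz1.
    pose proof (Hb z ltac:(lra)). pose proof (Rle_abs (- E' z)) as HA. rewrite Rabs_Ropp in HA. pose proof (exp_pos (K*z)).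
    pose proof (exp_pos (K*t)). pose proof (Hp t).
    assert (0 <= (E' z + K * E z) * exp (K * z)).
    { apply Rmult_le_pos; lra. }
    nra.
Qed.

Lemma bound3 al be ga g h A0 B0 G : Rabs al <= A0 -> Rabs be <= B0 -> Rabs ga <= G ->
  Rabs (al*(g*g) + be*(h*h) + ga*(g*h)) <= (A0+B0+G)*(g*g+h*h).
Proof.
  intros H1 H2 H3.
  eapply Rle_trans. apply Rabs_triang.
  eapply Rle_trans. apply Rplus_le_compat_r. apply Rabs_triang.
  rewrite !Rabs_mult.
  replace (Rabs g * Rabs g) with (g*g) by (rewrite <- Rabs_mult; symmetry; apply Rabs_pos_eq; nra).
  replace (Rabs h * Rabs h) with (h*h) by (rewrite <- Rabs_mult; symmetry; apply Rabs_pos_eq; nra).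
  pose proof (Rabs_pos g). pose proof (Rabs_pos h).
  pose proof (Rabs_pos al). pose proof (Rabs_pos be). pose proof (Rabs_pos ga).
  assert (Rabs g * Rabs h <= g*g + h*h).
  { assert (g*g = Rabs g * Rabs g) by (rewrite <- Rabs_mult; symmetry; apply Rabs_pos_eq; nra).
    assert (h*h = Rabs h * Rabs h) by (rewrite <- Rabs_mult; symmetry; apply Rabs_pos_eq; nra).
    nra. }
  assert (Rabs al * (g*g) <= A0 * (g*g)) by (apply Rmult_le_compat_r; nra).
  assert (Rabs be * (h*h) <= B0 * (h*h)) by (apply Rmult_le_compat_r; nra).
  assert (Rabs ga * (Rabs g * Rabs h) <= G * (g*g+h*h)).
  { apply Rmult_le_compat; nra. }
  nra.
Qed.

Definition gg (c : R) (x y : R -> R) t := 1 - x t - c * y t.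
Definition hh (a k m : R) (x y : R -> R) t := 1 / (1 + k * x t) - y t - a * x t - m * x t * y t.

Theorem theorem6 (a b c k m : R)
  (ha : 0 < a) (hb : 0 < b) (hc : 0 < c) (hk : 0 < k) (hm : 0 < m) :
  forall x y : R -> R,
    is_closed_trajectory a b c k m x y -> ~ in_open_quadrant x y.
Proof.
  intros x y [Hsol [[T [HT Hper]] [t1 [t2 Hne]]]] Hq.
  set (g := gg c x y). set (h := hh a k m x y).
  set (p0 := fun t => - (k / ((1 + k * x t) * (1 + k * x t))) - a - m * y t).
  assert (Hdx : forall t, is_derive x t (b * x t * g t)).
  { intro t. apply is_derive_Reals. exact (proj1 (Hsol t)). }
  assert (Hdy : forall t, is_derive y t (y t * h t)).
  { intro t. apply is_derive_Reals. exact (proj2 (Hsol t)). }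
  assert (Hcx : forall t, continuity_pt x t).
  { intro t. apply (D2C _ _ _ (proj1 (Hsol t))). }
  assert (Hcy : forall t, continuity_pt y t).
  { intro t. apply (D2C _ _ _ (proj2 (Hsol t))). }
  set (g' := fun t => - (b * x t * g t) - c * (y t * h t)).
  set (h' := fun t => p0 t * (b * x t * g t) - (1 + m * x t) * (y t * h t)).
  assert (Hdg : forall t, derivable_pt_lim g t (g' t)).
  { intro t. apply is_derive_Reals. unfold g, gg, g'.
    pose proof (Hdx t) as H1. pose proof (Hdy t) as H2.
    auto_derive. split; [eexists; exact H1| split; [eexists; exact H2|exact I]].
    replace (Derive (fun u => x u) t) with (b * x t * g t) by (symmetry; apply is_derive_unique; exact H1).
    replace (Derive (fun u => y u) t) with (y t * h t) by (symmetry; apply is_derive_unique; exact H2). unfold g, gg. ring. }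
  assert (Hdh : forall t, derivable_pt_lim h t (h' t)).
  { intro t. apply is_derive_Reals. unfold h, hh, h'.
    pose proof (Hdx t) as H1. pose proof (Hdy t) as H2.
    pose proof (proj1 (Hq t)). pose proof (proj2 (Hq t)).
    auto_derive.
    - repeat split; try (eexists; eassumption). nra.
    - replace (Derive (fun u => x u) t) with (b * x t * g t) by (symmetry; apply is_derive_unique; exact H1).
    replace (Derive (fun u => y u) t) with (y t * h t) by (symmetry; apply is_derive_unique; exact H2). unfold p0, g, gg, h, hh.
      field. nra. }

  assert (Hpx : forall t, x (t + T) = x t) by (intro t; exact (proj1 (Hper t))).
  assert (Hpy : forall t, y (t + T) = y t) by (intro t; exact (proj2 (Hper t))).
  assert (Hx0 : forall t, 0 < x t) by (intro t; exact (proj1 (Hq t))).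
  assert (Hy0 : forall t, 0 < y t) by (intro t; exact (proj2 (Hq t))).
  assert (Hp0 : forall t, p0 t < 0).
  { intro t. unfold p0. pose proof (Hx0 t). pose proof (Hy0 t).
    assert (0 < k / ((1 + k * x t) * (1 + k * x t))) by (apply Rdiv_lt_0_compat; nra).
    nra. }
  assert (Hp0b : forall t, - p0 t <= k + a + m * y t).
  { intro t. unfold p0. pose proof (Hx0 t).
    set (d := (1 + k * x t) * (1 + k * x t)).
    assert (1 <= d) by (unfold d; nra).
    assert (0 < k / d) by (apply Rdiv_lt_0_compat; lra).
    assert (k / d * d = k) by (field; lra).
    nra. }
  set (Q := fun t => g t * h t).
  set (Q' := fun t => g' t * h t + g t * h' t).
  assert (HdQ : forall t, derivable_pt_lim Q t (Q' t)).
  { intro t. exact (derivable_pt_lim_mult g h t _ _ (Hdg t) (Hdh t)). }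
  assert (HpQ : forall t, Q (t + T) = Q t).
  { intro t. unfold Q, g, h, gg, hh. rewrite Hpx, Hpy. reflexivity. }
  destruct (periodic_max x T HT Hpx Hcx) as [c1 [Hc1 Hm1]].
  assert (Hg1 : g c1 = 0).
  { assert (E0 : b * x c1 * g c1 = 0).
    { apply (max_deriv0 x (-T) (2*T) c1). exact (proj1 (Hsol c1)). lra. exact Hm1. }
    pose proof (Hx0 c1).
    destruct (Rmult_integral _ _ E0) as [E1|E1]; auto.
    destruct (Rmult_integral _ _ E1); lra. }
  destruct (periodic_max Q T HT HpQ (fun t => D2C _ _ _ (HdQ t))) as [c0 [Hc0 Hm0]].
  assert (HQ0 : 0 <= Q c0).
  { replace 0 with (Q c1). apply Hm0; lra. unfold Q. rewrite Hg1. ring. }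
  assert (HQ'0 : Q' c0 = 0).
  { apply (max_deriv0 Q (-T) (2*T) c0). apply HdQ. lra. exact Hm0. }
  assert (Hgh0 : g c0 = 0 /\ h c0 = 0).
  { unfold Q', g', h' in HQ'0. unfold Q in HQ0.
    pose proof (Hx0 c0). pose proof (Hy0 c0). pose proof (Hp0 c0).
    set (G := g c0) in *. set (Hv := h c0) in *. set (X := x c0) in *. set (Y := y c0) in *.
    set (P := p0 c0) in *.
    assert (T1 : 0 <= c * Y * (Hv * Hv)) by (apply Rmult_le_pos; nra).
    assert (T2 : 0 <= (- P) * b * X * (G * G)) by (apply Rmult_le_pos; [left; repeat apply Rmult_lt_0_compat; lra | nra]).
    assert (T3 : 0 <= (b * X + (1 + m * X) * Y) * (G * Hv)) by (apply Rmult_le_pos; [assert (0 < m*X) by nra; assert (0 < b*X) by nra; nra | lra]).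
    assert (c * Y * (Hv * Hv) + (- P) * b * X * (G * G) + (b * X + (1 + m * X) * Y) * (G * Hv) = 0).
    { match type of HQ'0 with ?L = 0 => transitivity (- L); [ring | rewrite HQ'0; ring] end. }
    assert (E1 : c * Y * (Hv * Hv) = 0) by lra.
    assert (E2 : (- P) * b * X * (G * G) = 0) by lra.
    split.
    - destruct (Rmult_integral _ _ E2) as [E3|E3]; [|destruct (Rmult_integral _ _ E3); auto].
      assert (0 < - P * b * X) by (apply Rmult_lt_0_compat; [apply Rmult_lt_0_compat|]; lra). lra.
    - destruct (Rmult_integral _ _ E1) as [E3|E3]; [|destruct (Rmult_integral _ _ E3); auto].
      assert (0 < c * Y) by (apply Rmult_lt_0_compat; lra). lra. }
  set (S := Rabs c0 + Rabs t1 + Rabs t2 + 1).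
  assert (HS : forall u, Rabs u <= S - 1 -> -S <= u <= S).
  { intros u Hu. pose proof (Rle_abs u). pose proof (Rle_abs (-u)). rewrite Rabs_Ropp in *. lra. }
  assert (HSpos : 0 < S) by (unfold S; pose proof (Rabs_pos c0); pose proof (Rabs_pos t1); pose proof (Rabs_pos t2); lra).
  destruct (continuity_ab_maj x (-S) S ltac:(lra) (fun t _ => Hcx t)) as [Mx [HMx _]].
  destruct (continuity_ab_maj y (-S) S ltac:(lra) (fun t _ => Hcy t)) as [My [HMy _]].
  set (X := x Mx) in *. set (Y := y My) in *.
  set (E := fun t => g t * g t + h t * h t).
  set (E' := fun t => (-2 * b * x t) * (g t * g t) + (-2 * (1 + m * x t) * y t) * (h t * h t)
                      + (2 * (p0 t * b * x t - c * y t)) * (g t * h t)).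
  assert (HdE : forall t, derivable_pt_lim E t (E' t)).
  { intro t.
    pose proof (derivable_pt_lim_plus _ _ t _ _ (derivable_pt_lim_mult g g t _ _ (Hdg t) (Hdg t))
               (derivable_pt_lim_mult h h t _ _ (Hdh t) (Hdh t))) as HH.
    replace (E' t) with (g' t * g t + g t * g' t + (h' t * h t + h t * h' t)).
    exact HH. unfold E', g', h'. ring. }
  assert (HbE : forall t, -S <= t <= S -> Rabs (E' t) <= (2*b*X + 2*(1+m*X)*Y + 2*((k+a+m*Y)*b*X + c*Y)) * E t).
  { intros t Ht. unfold E', E. apply bound3.
    - pose proof (HMx t Ht). pose proof (Hx0 t).
      assert (b * x t <= b * X) by (apply Rmult_le_compat_l; lra).
      assert (0 < b * x t) by (apply Rmult_lt_0_compat; lra).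
      rewrite Rabs_left1 by lra. lra.
    - pose proof (HMx t Ht). pose proof (Hx0 t). pose proof (HMy t Ht). pose proof (Hy0 t).
      assert ((1 + m * x t) * y t <= (1 + m * X) * Y).
      { apply Rmult_le_compat; try lra. assert (0 < m * x t) by nra. lra.
        assert (m * x t <= m * X) by (apply Rmult_le_compat_l; lra). lra. }
      assert (0 < (1 + m * x t) * y t) by (apply Rmult_lt_0_compat; nra).
      rewrite Rabs_left1 by lra. lra.
    - pose proof (HMx t Ht). pose proof (Hx0 t). pose proof (HMy t Ht). pose proof (Hy0 t).
      pose proof (Hp0 t). pose proof (Hp0b t).
      assert (m * y t <= m * Y) by (apply Rmult_le_compat_l; lra).
      assert (- p0 t * (b * x t) <= (k + a + m * Y) * (b * X)).
      { assert (0 < b * x t) by (apply Rmult_lt_0_compat; lra).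
        apply Rmult_le_compat; try lra.
        apply Rmult_le_compat_l; lra. }
      assert (c * y t <= c * Y) by (apply Rmult_le_compat_l; lra).
      assert (0 < - p0 t * (b * x t)) by (apply Rmult_lt_0_compat; [lra | apply Rmult_lt_0_compat; lra]).
      assert (0 < c * y t) by (apply Rmult_lt_0_compat; lra).
      rewrite Rabs_left1 by lra. lra. }
  assert (HE0 : forall t, -S <= t <= S -> E t = 0).
  { apply (gronwall E E' (2 * b * X + 2 * (1 + m * X) * Y + 2 * ((k + a + m * Y) * b * X + c * Y)) (-S) S c0 HdE).
    - intro t. unfold E. nra.
    - exact HbE.
    - apply HS. unfold S. pose proof (Rabs_pos t1); pose proof (Rabs_pos t2); lra.
    - unfold E. destruct Hgh0 as [-> ->]. ring. }
  assert (Hgz : forall t, -S <= t <= S -> g t = 0 /\ h t = 0).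
  { intros t Ht. pose proof (HE0 t Ht). unfold E in *. split; nra. }
  assert (Ht1 : -S <= t1 <= S).
  { apply HS. unfold S. pose proof (Rabs_pos c0); pose proof (Rabs_pos t2); lra. }
  assert (Ht2 : -S <= t2 <= S).
  { apply HS. unfold S. pose proof (Rabs_pos c0); pose proof (Rabs_pos t1); lra. }
  destruct Hne as [Hne|Hne]; apply Hne.
  - apply (const_on x (fun t => b * x t * g t) (-S) S); auto.
    + intro t. exact (proj1 (Hsol t)).
    + intros t Ht. rewrite (proj1 (Hgz t Ht)). ring.
  - apply (const_on y (fun t => y t * h t) (-S) S); auto.
    + intro t. exact (proj2 (Hsol t)).
    + intros t Ht. rewrite (proj2 (Hgz t Ht)). ring.
Qed.
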